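(* Let $G,H,H'$ be graphs with $V(G)=V(H)=V(H')=\{1,\ldots,n\}$ and $E(G)\subseteq E(H)\subseteq E(H')$, and let $A\in\mathcal{S}(G)$ have the strong spectral property with respect to $H$. Then for every $\epsilon>0$ there is a matrix $A'\in\mathcal{S}^{\rm cl}(H')$ such that $\operatorname{spec}(A')=\operatorname{spec}(A)$, $\|A-A'\|<\epsilon$, $A'$ has the strong spectral property with respect to $H'$, and every entry $a'_{ij}$ of $A'$ with $\{i,j\}\in E(H')\setminus E(H)$ is nonzero.
   Context: For a graph $G$ on $\{1,\ldots,n\}$, $\mathcal{S}(G)$ is the set of $n\times n$ real symmetric matrices $A=(a_{ij})$ with, for $i\neq j$, $a_{ij}\neq0$ iff $\{i,j\}\in E(G)$; $\mathcal{S}^{\rm cl}(G)$ is the set of $n\times n$ real symmetric matrices whose $(i,j)$-entry, $i\neq j$, is nonzero only if $\{i,j\}\in E(G)$ (its closure). $\overline{H}$ denotes the complement graph of $H$. If $A\in\mathcal{S}(G)$ and $H$ is a graph on the same vertex set with $E(G)\subseteq E(H)$, then $A$ has the strong spectral property with respect to $H$ if the only real symmetric matrix $X$ with $X\in\mathcal{S}^{\rm cl}(\overline{H})$, $I\circ X=O$ and $AX-XA=O$ is $X=O$ ($\circ$ the entrywise product). $\|\cdot\|$ is any fixed norm on $n\times n$ matrices. *)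

(* Defs.v *)
From HB Require Import structures.
From mathcomp Require Import all_boot all_order all_algebra.
From mathcomp Require Import reals.
Set Implicit Arguments. Unset Strict Implicit. Unset Printing Implicit Defensive.
Import Order.TTheory GRing.Theory Num.Theory.
Local Open Scope ring_scope.

(* A (simple) graph on the vertex set {1..n} (represented by 'I_n) is an
   irreflexive symmetric adjacency relation; {i,j} is an edge iff e i j. *)
Definition is_graph (n : nat) (e : rel 'I_n) : Prop :=
  symmetric e /\ irreflexive e.

Definition subgraph (n : nat) (G H : rel 'I_n) : Prop :=
  forall i j, G i j -> H i j.

Definition compl_graph (n : nat) (H : rel 'I_n) : rel 'I_n :=
  fun i j => (i != j) && ~~ H i j.

Definition in_S (R : realType) (n : nat) (G : rel 'I_n) (A : 'M[R]_n) : Prop :=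
  A^T = A /\ (forall i j, i != j -> (A i j != 0 <-> G i j)).

Definition in_Scl (R : realType) (n : nat) (G : rel 'I_n) (A : 'M[R]_n) : Prop :=
  A^T = A /\ (forall i j, i != j -> A i j != 0 -> G i j).

(* Strong spectral property of A with respect to H: the only real symmetric
   X in S^cl(complement of H) with zero diagonal (I o X = O) commuting with A
   is X = O. *)
Definition SSP_wrt (R : realType) (n : nat) (A : 'M[R]_n) (H : rel 'I_n) : Prop :=
  forall X : 'M[R]_n,
    in_Scl (compl_graph H) X ->
    (forall i, X i i = 0) ->
    A *m X - X *m A = 0 ->
    X = 0.

(* spec(A) = spec(B) as multisets of eigenvalues: every real number has the
   same algebraic multiplicity (root multiplicity in the characteristic
   polynomial) as an eigenvalue of A and of B. *)
Definition same_spec (R : realType) (n : nat) (A B : 'M[R]_n) : Prop :=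
  forall x : R, mup x (char_poly A) = mup x (char_poly B).

Definition is_mx_norm (R : realType) (n : nat) (N : 'M[R]_n -> R) : Prop :=
  [/\ forall A, 0 <= N A,
      forall A, N A = 0 -> A = 0,
      forall (c : R) A, N (c *: A) = `|c| * N A
    & forall A B, N (A + B) <= N A + N B].

(* Main.v *)
Require Import Defs.
From HB Require Import structures.
From mathcomp Require Import all_boot all_order all_algebra.
From mathcomp Require Import reals.
From mathcomp Require Import all_classical all_reals all_analysis.
From mathcomp Require Import ring lra.
Import Order.TTheory GRing.Theory Num.Theory.
Import numFieldNormedType.Exports.
Local Open Scope ring_scope.
Section Norms.
Context {R : realType}.

Lemma mxnE {m n} (x : 'M[R]_(m, n)) : `|x| = \big[Num.max/0]_ij `|x ij.1 ij.2|.
Proof. exact: mx_normrE. Qed.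

Lemma mxn_entry {m n} (x : 'M[R]_(m, n)) i j : `|x i j| <= `|x|.
Proof. by rewrite mxnE; apply/bigmax_geP; right; exists (i, j). Qed.

Lemma mxn_le {m n} (x : 'M[R]_(m, n)) c : 0 <= c -> (forall i j, `|x i j| <= c) -> `|x| <= c.
Proof. by move=> c0 H; rewrite mxnE; apply/bigmax_leP; split => // -[i j] _; apply: H. Qed.

Lemma mxn_tr n (x : 'M[R]_n) : `|x^T| = `|x|.
Proof.
apply/eqP; rewrite eq_le; apply/andP; split; apply: mxn_le => // i j;
  rewrite ?mxE; [exact: mxn_entry | ].
by have := mxn_entry x^T j i; rewrite mxE.
Qed.

Lemma mxn_mul {m n p} (x : 'M[R]_(m, n)) (y : 'M[R]_(n, p)) : `|x *m y| <= n%:R * `|x| * `|y|.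
Proof.
apply: mxn_le; first by rewrite !mulr_ge0.
move=> i j; rewrite mxE; apply: le_trans (ler_norm_sum _ _ _) _.
rewrite -mulrA mulr_natl -[n in _ *+ n]card_ord -sumr_const; apply: ler_sum => k _.
by rewrite normrM ler_pM ?mxn_entry.
Qed.


Lemma mxn_ge0 {m n} (x : 'M[R]_(m, n)) : 0 <= `|x|.
Proof. exact: normr_ge0. Qed.

Lemma mxn_mxvec {m n} (x : 'M[R]_(m, n)) : `|mxvec x| <= `|x|.
Proof.
apply: mxn_le => // i k; rewrite (ord1 i).
by case/mxvec_indexP: k => a b; rewrite mxvecE mxn_entry.
Qed.

Lemma mxn_vec_mx {m n} (u : 'rV[R]_(m * n)) : `|vec_mx u| <= `|u|.
Proof. by apply: mxn_le => // i j; rewrite mxE mxn_entry. Qed.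

Lemma lin_inv n (f : 'M[R]_n -> 'M[R]_n) : linear f -> injective f ->
  exists g : 'M[R]_n -> 'M[R]_n, exists C : R,
    [/\ 0 <= C, (forall Y, f (g Y) = Y) & (forall Y, `|g Y| <= C * `|Y|)].
Proof.
move=> lin_f injf.
pose flM := GRing.isLinear.Build _ _ _ _ f lin_f.
pose fL : {linear _ -> _} := HB.pack f flM.
pose L := lin_mx fL.
have f0 : f 0 = 0 by have := linear0 fL.
have Lu : L \in unitmx.
  rewrite -row_free_unit -kermx_eq0; apply/eqP/row_matrixP => i.
  rewrite row0.
  have := mulmx_ker L; move/(congr1 (row i)); rewrite row_mul row0.
  rewrite /L mul_rV_lin => /eqP; rewrite mxvec_eq0 => /eqP.
  rewrite -f0 => /injf /(congr1 mxvec); rewrite vec_mxK => ->.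
  by apply/rowP => k; rewrite !mxE; case/mxvec_indexP: k => a b; rewrite mxvecE mxE.
exists (fun Y => vec_mx (mxvec Y *m invmx L)).
exists ((n * n)%:R * `|invmx L|); split.
- by rewrite mulr_ge0.
- move=> Y; have := mx_rV_lin fL (mxvec Y *m invmx L).
  by rewrite -/L mulmxKV // mxvecK => H; exact: (esym H).
- move=> Y; apply: le_trans (mxn_vec_mx _) _.
  apply: le_trans (mxn_mul _ _) _.
  rewrite mulrAC ler_wpM2l ?mulr_ge0 //.
  exact: mxn_mxvec.
Qed.

End Norms.

Definition PW {R : realType} {n} (H : rel 'I_n) (X : 'M[R]_n) : 'M[R]_n :=
  \matrix_(i, j) (if compl_graph H i j then (X i j + X j i) / 2 else 0).

Definition comm {R : realType} {n} (A X : 'M[R]_n) : 'M[R]_n := A *m X - X *m A.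

Lemma PW_lin (R : realType) n H : linear (@PW R n H).
Proof.
move=> a X Y; apply/matrixP => i j; rewrite !mxE.
by case: ifP => _; rewrite ?mulr0 ?addr0 //; ring.
Qed.

Lemma comm_lin (R : realType) n A : linear (@comm R n A).
Proof.
move=> a X Y; rewrite /comm mulmxDr mulmxDl -!scalemxAl -!scalemxAr.
by rewrite scalerBr opprD !addrA; congr (_ - _); rewrite addrAC.
Qed.

HB.instance Definition _ (R : realType) n H :=
  GRing.isLinear.Build R 'M[R]_n 'M[R]_n *:%R (@PW R n H) (@PW_lin R n H).
HB.instance Definition _ (R : realType) n A :=
  GRing.isLinear.Build R 'M[R]_n 'M[R]_n *:%R (@comm R n A) (@comm_lin R n A).

Definition Mt {R : realType} {n} (A : 'M[R]_n) H X :=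
  PW H (comm A (comm A (PW H X))) + (X - PW H X).

Definition ip {R : realType} {n} (X Y : 'M[R]_n) := \tr (X^T *m Y).

Section Core.
Context {R : realType} {n : nat}.
Implicit Types (A X Y Z : 'M[R]_n) (H : rel 'I_n).

Lemma Mt_aux (a : R) (p1 p2 x y q1 q2 : 'M[R]_n) :
  a *: p1 + p2 + (a *: x + y + (a *: - q1 - q2)) = a *: (p1 + (x - q1)) + (p2 + (y - q2)).
Proof. by apply/matrixP => i j; rewrite !mxE; ring. Qed.

Lemma Mt_lin A H : linear (Mt A H).
Proof. by move=> a X Y; rewrite /Mt !linearP /=; apply: Mt_aux. Qed.

End Core.

HB.instance Definition _ (R : realType) n A H :=
  GRing.isLinear.Build R 'M[R]_n 'M[R]_n *:%R (@Mt R n A H) (@Mt_lin R n A H).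

Section Core2.
Context {R : realType} {n : nat}.
Implicit Types (A X Y Z : 'M[R]_n) (H : rel 'I_n).

Lemma ipE X Y : ip X Y = \sum_i \sum_j X i j * Y i j.
Proof.
rewrite /ip /mxtrace exchange_big; apply: eq_bigr => j _; rewrite mxE.
by apply: eq_bigr => i _; rewrite mxE.
Qed.

Lemma ip_comm A X Y : A^T = A -> ip X (comm A Y) = ip (comm A X) Y.
Proof.
move=> sA; rewrite /ip /comm mulmxBr linearB /= [(_ - _)^T]linearB /= !trmx_mul sA mulmxBl !mulmxA.
rewrite [RHS]linearB /=; congr (_ - _); by rewrite mxtrace_mulC mulmxA. Qed.


Lemma compl_sym H : symmetric H -> forall i j, compl_graph H i j = compl_graph H j i.
Proof. by move=> sH i j; rewrite /compl_graph eq_sym sH. Qed.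

Lemma PW_tr H X : symmetric H -> (PW H X)^T = PW H X.
Proof.
move=> sH; apply/matrixP => i j; rewrite !mxE compl_sym //.
by case: ifP => // _; rewrite addrC.
Qed.

Lemma PW_id H X : symmetric H -> PW H (PW H X) = PW H X.
Proof.
move=> sH; apply/matrixP => i j; rewrite !mxE.
by case: ifP => // c; rewrite c compl_sym // c; field.
Qed.

Lemma PW_norm H X : `|PW H X| <= `|X|.
Proof.
apply: mxn_le => // i j; rewrite mxE; case: ifP => _; first last.
  by rewrite normr0.
rewrite normrM [`|2^-1|]ger0_norm ?invr_ge0 // ler_pdivrMr //.
by apply: le_trans (ler_normD _ _) _; have := mxn_entry X i j; have := mxn_entry X j i; lra.
Qed.

Lemma ip_self0 X : ip X X = 0 -> X = 0.
Proof.
rewrite ipE => /eqP; rewrite psumr_eq0 => [/allP H|i _]; last first.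
  by apply: sumr_ge0 => j _; rewrite -expr2 sqr_ge0.
apply/matrixP => i j; rewrite mxE.
have /implyP /(_ isT) := H i (mem_index_enum _).
rewrite psumr_eq0 => [/allP /(_ j (mem_index_enum _)) /implyP /(_ isT)|k _].
  by rewrite mulf_eq0 orbb => /eqP.
by rewrite -expr2 sqr_ge0.
Qed.

Lemma ip_PW H X Z : symmetric H -> ip (PW H X) Z = ip X (PW H Z).
Proof.
move=> sH; rewrite !ipE.
have E : forall (U V : 'M[R]_n), \sum_i \sum_j (PW H U) i j * V i j =
   2^-1 * \sum_i \sum_j (if compl_graph H i j then U i j * V i j else 0) +
   2^-1 * \sum_i \sum_j (if compl_graph H i j then U j i * V i j else 0).
  move=> U V; rewrite !mulr_sumr -big_split; apply: eq_bigr => i _ /=.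
  rewrite !mulr_sumr -big_split; apply: eq_bigr => j _ /=; rewrite mxE.
  by case: ifP => _; [ring | ring].
rewrite E.
have -> : \sum_i \sum_j X i j * PW H Z i j = \sum_i \sum_j PW H Z i j * X i j.
  by apply: eq_bigr => i _; apply: eq_bigr => j _; rewrite mulrC.
rewrite E; congr (_ + _).
  by congr (_ * _); apply: eq_bigr => i _; apply: eq_bigr => j _; case: ifP; rewrite // mulrC.
congr (_ * _); rewrite exchange_big; apply: eq_bigr => i _; apply: eq_bigr => j _.
by rewrite compl_sym //; case: ifP; rewrite // mulrC.
Qed.

Lemma ip0r X : ip X 0 = 0.
Proof. by rewrite /ip mulmx0 linear0. Qed.

Lemma PW_Mt A H X : symmetric H ->
  PW H (Mt A H X) = PW H (comm A (comm A (PW H X))).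
Proof.
move=> sH; rewrite /Mt; move: (comm A (comm A (PW H X))) => Z.
by rewrite linearD linearB /= !PW_id // subrr addr0.
Qed.

Lemma Mt_inj A H : A^T = A -> symmetric H -> SSP_wrt A H -> injective (Mt A H).
Proof.
move=> sA sH ssp.
suff M0 : forall X, Mt A H X = 0 -> X = 0.
  move=> X Y E; apply/eqP; rewrite -subr_eq0; apply/eqP/M0.
  by rewrite linearB /= E subrr.
move=> X MX.
have hP : PW H (comm A (comm A (PW H X))) = 0.
  by move/(congr1 (PW H)): MX; rewrite linear0 PW_Mt.
have XY : X = PW H X.
  by move: MX; rewrite /Mt hP add0r => /eqP; rewrite subr_eq0 => /eqP.
set Y := PW H X in hP XY.
have C0 : comm A Y = 0.
  apply: ip_self0; rewrite -ip_comm // /Y ip_PW // hP ip0r //.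
rewrite XY; apply: ssp.
- split; first exact: PW_tr.
  by move=> i j _; rewrite /Y mxE; case: ifP => //; rewrite eqxx.
- by move=> i; rewrite /Y mxE /compl_graph eqxx.
- exact: C0.
Qed.

End Core2.

Local Open Scope classical_set_scope.

Lemma my_banach (R : realType) (X : completeNormedModType R) (U : set X)
  (f : X -> X) (q : R) (x0 : X) :
  closed U -> U x0 -> (forall x, U x -> U (f x)) -> 0 <= q -> q < 1 ->
  (forall x y, U x -> U y -> `|f x - f y| <= q * `|x - y|) ->
  exists2 p, U p & p = f p.
Proof.
move=> cU Ux0 fU q0 q1 lip.
have := @banach_fixed_point R X U (mkfun_fun fU).
apply => //; last by exists x0.
exists (NngNum q0); split => //.
by case=> x y [/= Ux Uy]; apply: lip.
Qed.

HB.instance Definition _ (R : realType) (n : nat) :=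
  Uniform_isComplete.Build (matrix R n n) cauchy_cvg.

Lemma mx_banach (R : realType) n (f : 'M[R]_n -> 'M[R]_n) (r : R) :
  0 < r -> (forall x, `|x| <= r -> `|f x| <= r) ->
  (forall x y, `|x| <= r -> `|y| <= r -> `|f x - f y| <= 2^-1 * `|x - y|) ->
  exists Z, `|Z| <= r /\ Z = f Z.
Proof.
move=> r0 fU lip.
have cU : closed [set x : 'M[R]_n | `|x| <= r].
  have -> : [set x : 'M[R]_n | `|x| <= r] = closed_ball 0 r.
    rewrite closed_ballE //; apply/funext => y /=.
    by rewrite /closed_ball_ /= sub0r normrN.
  exact: closed_ball_closed.
have U0 : [set x : 'M[R]_n | `|x| <= r] 0 by rewrite /= normr0 ltW.
have q0 : (0 : R) <= 2^-1 by rewrite invr_ge0.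
have q1 : (2^-1 : R) < 1 by rewrite invf_lt1 // ltr1n.
have [p Up Ep] := @my_banach R _ [set x : 'M[R]_n | `|x| <= r] f (2^-1) 0 cU U0 fU q0 q1 lip.
by exists p.
Qed.

Local Close Scope classical_set_scope.

Section Fix.
Variables (R : realType) (n : nat).
Implicit Types (A X Y Z : 'M[R]_n) (H : rel 'I_n).
Local Notation k := (n%:R : R).

Lemma k_ge0 : 0 <= k. Proof. exact: ler0n. Qed.

Lemma mxn_mulb X Y a b : `|X| <= a -> `|Y| <= b -> `|X *m Y| <= k * a * b.
Proof.
move=> hX hY; apply: le_trans (mxn_mul _ _) _.
by rewrite -mulrA -[k * a * b]mulrA ler_wpM2l ?k_ge0 // ler_pM.
Qed.

Lemma comm_norm A X : `|comm A X| <= 2 * k * `|A| * `|X|.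
Proof.
apply: le_trans (ler_normB _ _) _.
have h1 := mxn_mul A X; have h2 := mxn_mul X A.
have -> : 2 * k * `|A| * `|X| = k * `|A| * `|X| + k * `|X| * `|A| by ring.
exact: lerD.
Qed.

Lemma aux_w (b p1 s1 p2 s2 : 'M[R]_n) :
  (b - p1 + s1) - (b - p2 + s2) = -(p1 - p2) + (s1 - s2).
Proof. by apply/matrixP => i j; rewrite !mxE; ring. Qed.

Lemma aux_T (h : R) (s1 c1 s2 c2 : 'M[R]_n) :
  (-(h *: s1) + c1) - (-(h *: s2) + c2) = -(h *: (s1 - s2)) + (c1 - c2).
Proof. by apply/matrixP => i j; rewrite !mxE; ring. Qed.

Lemma aux_sub (x y z : 'M[R]_n) : x - z = (x - y) + (y - z).
Proof. by apply/matrixP => i j; rewrite !mxE; ring. Qed.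

Lemma aux_E2 (h : R) (x y u v : 'M[R]_n) :
  -(h *: x) + u + (-(h *: y) - v) = -(h *: (y + x)) + (u - v).
Proof. by apply/matrixP => i j; rewrite !mxE; ring. Qed.

Lemma aux_fin (h : R) (z x y b : 'M[R]_n) :
  z + (-(h *: x) + (b - y + h *: x)) + y = z + b.
Proof. by apply/matrixP => i j; rewrite !mxE; ring. Qed.

Lemma fixed_Z A H b (g : 'M[R]_n -> 'M[R]_n) C r :
  A^T = A -> symmetric H -> PW H b = b ->
  (forall Y, Mt A H (g Y) = Y) -> (forall X, g (Mt A H X) = X) ->
  0 <= C -> (forall Y, `|g Y| <= C * `|Y|) ->
  0 < r -> r * (k + 8 * k ^+ 3 * `|A| ^+ 2 * C) <= 2^-1 ->
  2 * k * `|A| * C * `|b| <= r / 2 ->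
  exists Z, [/\ `|Z| <= r, (1%:M + Z)^T *m (1%:M + Z) = 1%:M &
     PW H ((1%:M + Z)^T *m A *m (1%:M + Z)) = PW H A + b].
Proof.
move=> sA sH Pb gK Kg C0 gC r0 rK bK.
have gB : forall Y1 Y2, g (Y1 - Y2) = g Y1 - g Y2.
  by move=> Y1 Y2; rewrite -{1}(gK Y1) -{1}(gK Y2) -linearB Kg.
pose S Z := Z^T *m Z.
pose w Z := b - PW H (Z^T *m A *m Z) + 2^-1 *: PW H (S Z *m A + A *m S Z).
pose T Z := - (2^-1 *: S Z) + comm A (PW H (g (w Z))).
set a := `|A|.
have a0 : 0 <= a by exact: normr_ge0.
have Tlip : forall Z1 Z2, `|Z1| <= r -> `|Z2| <= r ->
    `|T Z1 - T Z2| <= 2^-1 * `|Z1 - Z2|.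
  move=> Z1 Z2 h1 h2; set D := Z1 - Z2.
  have d0 : 0 <= `|D| by exact: normr_ge0.
  have hS : S Z1 - S Z2 = Z1^T *m D + D^T *m Z2.
    by rewrite /S /D mulmxBr linearB /= mulmxBl -aux_sub.
  have nS : `|S Z1 - S Z2| <= 2 * k * r * `|D|.
    rewrite hS; apply: le_trans (ler_normD _ _) _.
    have u := @mxn_mulb Z1^T D r ( `|D| ) (ltac:(by rewrite mxn_tr)) (lexx _).
    have v := @mxn_mulb D^T Z2 ( `|D| ) r (ltac:(by rewrite mxn_tr)) h2.
    have -> : 2 * k * r * `|D| = k * r * `|D| + k * `|D| * r by ring.
    exact: lerD.
  have hU : Z1^T *m A *m Z1 - Z2^T *m A *m Z2 = Z1^T *m A *m D + D^T *m A *m Z2.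
    by rewrite /D mulmxBr linearB /= !mulmxBl -aux_sub.
  have nU : `|Z1^T *m A *m Z1 - Z2^T *m A *m Z2| <= 2 * k ^+ 2 * a * r * `|D|.
    rewrite hU; apply: le_trans (ler_normD _ _) _.
    have u1 := @mxn_mulb Z1^T A r a (ltac:(by rewrite mxn_tr)) (lexx _).
    have u := @mxn_mulb (Z1^T *m A) D (k * r * a) ( `|D| ) u1 (lexx _).
    have v1 := @mxn_mulb D^T A ( `|D| ) a (ltac:(by rewrite mxn_tr)) (lexx _).
    have v := @mxn_mulb (D^T *m A) Z2 (k * `|D| * a) r v1 h2.
    have -> : 2 * k ^+ 2 * a * r * `|D| = k * (k * r * a) * `|D| + k * (k * `|D| * a) * r by ring.
    exact: lerD.
  have hV : (S Z1 *m A + A *m S Z1) - (S Z2 *m A + A *m S Z2) =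
      (S Z1 - S Z2) *m A + A *m (S Z1 - S Z2).
    by rewrite mulmxBl mulmxBr; apply/matrixP => i j; rewrite !mxE; ring.
  have nV : `|(S Z1 *m A + A *m S Z1) - (S Z2 *m A + A *m S Z2)| <= 4 * k ^+ 2 * a * r * `|D|.
    rewrite hV; apply: le_trans (ler_normD _ _) _.
    have u := @mxn_mulb (S Z1 - S Z2) A _ a nS (lexx _).
    have v := @mxn_mulb A (S Z1 - S Z2) a _ (lexx _) nS.
    have -> : 4 * k ^+ 2 * a * r * `|D| = k * (2 * k * r * `|D|) * a + k * a * (2 * k * r * `|D|) by ring.
    exact: lerD.
  have hW : w Z1 - w Z2 = - PW H (Z1^T *m A *m Z1 - Z2^T *m A *m Z2) +
      2^-1 *: PW H ((S Z1 *m A + A *m S Z1) - (S Z2 *m A + A *m S Z2)).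
    by rewrite /w aux_w !linearB /=.
  have nW : `|w Z1 - w Z2| <= 4 * k ^+ 2 * a * r * `|D|.
    rewrite hW; apply: le_trans (ler_normD _ _) _; rewrite normrN normrZ.
    have u := le_trans (PW_norm _ _) nU.
    have v := le_trans (PW_norm _ _) nV.
    rewrite ger0_norm ?invr_ge0 //.
    have -> : 4 * k ^+ 2 * a * r * `|D| = 2 * k ^+ 2 * a * r * `|D| + 2^-1 * (4 * k ^+ 2 * a * r * `|D|) by field.
    by rewrite lerD // ler_wpM2l // invr_ge0.
  have hT : T Z1 - T Z2 = -(2^-1 *: (S Z1 - S Z2)) + comm A (PW H (g (w Z1 - w Z2))).
    by rewrite /T aux_T gB !linearB.
  rewrite hT; apply: le_trans (ler_normD _ _) _; rewrite normrN normrZ ger0_norm ?invr_ge0 //.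
  have u : 2^-1 * `|S Z1 - S Z2| <= k * r * `|D|.
    have -> : k * r * `|D| = 2^-1 * (2 * k * r * `|D|) by field.
    by rewrite ler_wpM2l // invr_ge0.
  have v : `|comm A (PW H (g (w Z1 - w Z2)))| <= 2 * k * a * (C * (4 * k ^+ 2 * a * r * `|D|)).
    apply: le_trans (comm_norm _ _) _; rewrite ler_wpM2l ?mulr_ge0 ?k_ge0 //.
    apply: le_trans (PW_norm _ _) _; apply: le_trans (gC _) _.
    by rewrite ler_wpM2l.
  apply: le_trans (lerD u v) _.
  have -> : k * r * `|D| + 2 * k * a * (C * (4 * k ^+ 2 * a * r * `|D|)) =
     (r * (k + 8 * k ^+ 3 * a ^+ 2 * C)) * `|D| by ring.
  by rewrite ler_wpM2r.
have T0 : T 0 = comm A (PW H (g b)).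
  by rewrite /T /w /S trmx0 !mul0mx !mulmx0 !add0r !linear0 /= !addr0 add0r.
have TU : forall Z, `|Z| <= r -> `|T Z| <= r.
  move=> Z hZ; rewrite -[T Z](subrK (T 0)).
  apply: le_trans (ler_normD _ _) _.
  have u := Tlip Z 0 hZ (ltac:(by rewrite normr0 ltW)).
  rewrite subr0 in u.
  have v : `|T 0| <= r / 2.
    rewrite T0; apply: le_trans (comm_norm _ _) _.
    apply: le_trans bK; rewrite -!mulrA !ler_wpM2l ?k_ge0 //.
    by apply: le_trans (PW_norm _ _) _; apply: gC.
  have -> : r = 2^-1 * r + r / 2 by field.
  apply: lerD => //; apply: le_trans u _; rewrite ler_wpM2l // invr_ge0 //.
have [Z [hZ EZ]] := @mx_banach R n T r r0 TU Tlip.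
set SZ := S Z in EZ; set P := PW H (g (w Z)); set K := comm A P.
have EZ' : Z = -(2^-1 *: SZ) + K by exact: EZ.
have hP : P^T = P by exact: PW_tr.
have hK : K^T = - K by rewrite /K /comm linearB /= !trmx_mul sA hP opprB.
have hST : SZ^T = SZ by rewrite /SZ /S trmx_mul trmxK.
have hZT : Z^T = -(2^-1 *: SZ) - K.
  by rewrite {1}EZ' linearD linearN linearZ /= hST hK.
exists Z; split => //.
- have hsum : Z + Z^T = - SZ.
    by rewrite hZT {1}EZ'; apply/matrixP => i j; rewrite !mxE; field.
  rewrite [(_ + _)^T]linearD /= trmx1 mulmxDl !mulmxDr !mul1mx mulmx1.
  rewrite addrA -(addrA 1%:M) hsum -/(S Z) -/SZ.
  by rewrite -addrA addNr addr0.
have E1 : (1%:M + Z)^T *m A *m (1%:M + Z) = A + (A *m Z + Z^T *m A) + Z^T *m A *m Z.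
  by rewrite [(_ + _)^T]linearD /= trmx1 !mulmxDl !mulmxDr !mul1mx !mulmx1 !addrA.
have E2 : A *m Z + Z^T *m A = -(2^-1 *: (SZ *m A + A *m SZ)) + comm A K.
  rewrite {1}EZ' hZT mulmxDr mulmxBl mulmxN mulNmx -scalemxAr -scalemxAl /comm.
  exact: aux_E2.
have Pw : PW H (w Z) = w Z.
  by rewrite /w !linearD !linearN !linearZ /= !PW_id // Pb.
have E3 : PW H (comm A K) = w Z by rewrite /K /P -PW_Mt // gK Pw.
rewrite E1 E2.
have L : forall (v c u : 'M[R]_n), PW H (A + (-(2^-1 *: v) + c) + u) =
    PW H A + (-(2^-1 *: PW H v) + PW H c) + PW H u.
  by move=> v c u; rewrite !linearD linearN linearZ.
rewrite L E3 /w; exact: aux_fin.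
Qed.

End Fix.

Section Final.
Context {R : realType} {n : nat}.
Implicit Types (A X Y Z : 'M[R]_n) (H : rel 'I_n).
Local Notation k := (n%:R : R).

Lemma char_poly_conj A (Q : 'M[R]_n) : Q^T *m Q = 1%:M -> char_poly (Q^T *m A *m Q) = char_poly A.
Proof.
move=> QQ; rewrite /char_poly /char_poly_mx !map_mxM.
set f := map_mx (@polyC R).
have fQ : f Q^T *m f Q = 1%:M by rewrite -map_mxM QQ map_mx1.
have EX : ('X%:M : 'M[{poly R}]_n) = f Q^T *m 'X%:M *m f Q.
  by rewrite -mulmxA -scalar_mxC mulmxA fQ mul1mx.
rewrite [in LHS]EX -mulmxBl -mulmxBr !det_mulmx mulrC mulrA -det_mulmx.
by rewrite (mulmx1C fQ) det1 mul1r.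
Qed.

Lemma expand_QAQ A Z : (1%:M + Z)^T *m A *m (1%:M + Z) =
  A + (A *m Z + Z^T *m A) + Z^T *m A *m Z.
Proof. by rewrite [(_ + _)^T]linearD /= trmx1 !mulmxDl !mulmxDr !mul1mx !mulmx1 !addrA. Qed.

Lemma N_bound (N : 'M[R]_n -> R) : is_mx_norm N ->
  forall X, N X <= (\sum_i \sum_j N (delta_mx i j)) * `|X|.
Proof.
case=> N0 _ NZ ND X.
have Nz : N 0 = 0 by rewrite -(scale0r (0 : 'M[R]_n)) NZ normr0 mul0r.
have Nsum : forall (I : Type) (r : seq I) (F : I -> 'M[R]_n),
    N (\sum_(i <- r) F i) <= \sum_(i <- r) N (F i).
  move=> I r F; elim: r => [|x r IH]; first by rewrite !big_nil Nz.
  by rewrite !big_cons; apply: le_trans (ND _ _) _; rewrite lerD2l.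
rewrite [X in N X]matrix_sum_delta; apply: le_trans (Nsum _ _ _) _.
rewrite mulr_suml; apply: ler_sum => i _.
apply: le_trans (Nsum _ _ _) _; rewrite mulr_suml; apply: ler_sum => j _.
by rewrite NZ mulrC ler_wpM2l // mxn_entry.
Qed.

End Final.

Lemma comm_subl (R : realType) n (A B X : 'M[R]_n) : comm A X - comm B X = comm (A - B) X.
Proof. by rewrite /comm mulmxBl mulmxBr; apply/matrixP => i j; rewrite !mxE; ring. Qed.

Lemma sym_entry (R : realType) n (M : 'M[R]_n) i j : M^T = M -> M j i = M i j.
Proof. by move=> sM; rewrite -{2}sM mxE. Qed.

Theorem theorem3p4 (R : realType) (n : nat) (N : 'M[R]_n -> R)
    (G H H' : rel 'I_n) (A : 'M[R]_n) :
  is_mx_norm N ->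
  is_graph G -> is_graph H -> is_graph H' ->
  subgraph G H -> subgraph H H' ->
  in_S G A -> SSP_wrt A H ->
  forall eps : R, 0 < eps ->
  exists A' : 'M[R]_n,
    [/\ in_Scl H' A',
        same_spec A A',
        N (A - A') < eps,
        SSP_wrt A' H'
      & forall i j, H' i j -> ~~ H i j -> A' i j != 0].
Proof.
move=> normN [sG iG] [sH iH] [sH' iH'] GH HH' [sA pA] ssp eps eps0.
have Minj := @Mt_inj R n A H sA sH ssp.
have [g [C [C0 gK gC]]] := @lin_inv R n (Mt A H) (@Mt_lin R n A H) Minj.
have Kg : forall X, g (Mt A H X) = X by move=> X; apply: Minj; rewrite gK.
set CN := \sum_i \sum_j N (delta_mx i j).
have NB := @N_bound R n N normN.
have CN0 : 0 <= CN.
  by apply: sumr_ge0 => i _; apply: sumr_ge0 => j _; case: normN.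
set k : R := n%:R.
have k0 : 0 <= k by exact: ler0n.
set a := `|A|.
have a0 : 0 <= a by exact: normr_ge0.
set K0 := k + 8 * k ^+ 3 * a ^+ 2 * C.
set K1 := (2 * k + k ^+ 2) * a.
have K00 : 0 <= K0 by rewrite /K0 addr_ge0 // !mulr_ge0 // ?exprn_ge0.
have K10 : 0 <= K1 by rewrite /K1 mulr_ge0 // addr_ge0 ?mulr_ge0 ?exprn_ge0.
set Dn := 1 + 2 * K0 + 2 * (CN * K1) / eps + 8 * (k ^+ 2 * C * a * K1).
have X1 : 0 <= 2 * (CN * K1) / eps.
  by apply: divr_ge0; [apply: mulr_ge0 => //; apply: mulr_ge0 | exact: ltW].
have X2 : 0 <= 8 * (k ^+ 2 * C * a * K1).
  by apply: mulr_ge0 => //; apply: mulr_ge0 => //; apply: mulr_ge0 => //; apply: mulr_ge0 => //; exact: exprn_ge0.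
have Dn1 : 1 <= Dn by rewrite /Dn; lra.
have Dn0 : 0 < Dn by lra.
set r := Dn^-1.
have r0 : 0 < r by rewrite invr_gt0.
have r1 : r <= 1 by rewrite invf_le1.
have rK0 : r * K0 <= 2^-1.
  rewrite mulrC ler_pdivrMr // -ler_pdivrMl //; rewrite /Dn; lra.
have rK1 : CN * K1 * r < eps.
  rewrite ltr_pdivrMr //; rewrite /Dn.
  have : (CN * K1) = 2^-1 * (2 * (CN * K1) / eps) * eps by field; rewrite gt_eqF.
  move=> E; rewrite [X in X < _]E.
  rewrite mulrC ltr_pM2l //.
  have : 2^-1 * (2 * (CN * K1) / eps) <= 2 * (CN * K1) / eps by lra.
  lra.
have rS : 4 * k ^+ 2 * C * a * K1 * r <= 2^-1.
  have -> : 4 * k ^+ 2 * C * a * K1 * r = 2^-1 * (8 * (k ^+ 2 * C * a * K1) / Dn) by rewrite /r; field; rewrite gt_eqF.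
  apply: ler_piMr; first by rewrite invr_ge0.
  rewrite ler_pdivrMr // mul1r /Dn; lra.
set c2 := 2 * k * a * C.
have c20 : 0 <= c2 by rewrite /c2 !mulr_ge0.
set t := r / (2 * (c2 + 1)).
have t0 : 0 < t by rewrite /t divr_gt0 // mulr_gt0 //; lra.
have ct : c2 * t <= r / 2.
  rewrite /t; have -> : c2 * (r / (2 * (c2 + 1))) = (c2 / (c2 + 1)) * (r / 2).
    by field; rewrite gt_eqF // ltr_wpDl.
  apply: ler_piMl; first by rewrite divr_ge0 // ltW.
  rewrite ler_pdivrMr; lra.
pose b : 'M[R]_n := \matrix_(i, j) (if H' i j && ~~ H i j then t else 0).
have bn : `|b| <= t.
  apply: mxn_le => [|i j]; first exact: ltW.
  by rewrite mxE; case: ifP => _; [rewrite gtr0_norm | rewrite normr0 ltW].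
have bK : 2 * k * a * C * `|b| <= r / 2.
  by apply: le_trans ct; rewrite -/c2 ler_wpM2l.
have Pb : PW H b = b.
  apply/matrixP => i j; rewrite !mxE; case: ifP => c.
    by rewrite (sH' j i) (sH j i); field.
  move: c; rewrite /compl_graph; case: eqVneq => [-> _|_ /= /negbFE Hij].
    by rewrite iH'.
  by rewrite Hij andbF.
have [Z [hZ QQ PQ]] := @fixed_Z R n A H b g C r sA sH Pb gK Kg C0 gC r0 rK0 bK.
set A' := (1%:M + Z)^T *m A *m (1%:M + Z) in PQ *.
have PA0 : PW H A = 0.
  apply/matrixP => i j; rewrite !mxE; case: ifP => // /andP [ij nH].
  have nG : ~~ G i j by apply: contra nH; apply: GH.
  have nG' : ~~ G j i by rewrite sG.
  have a1 : A i j = 0 by apply/eqP; apply: contraNT nG => /(pA i j ij).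
  have a2 : A j i = 0 by apply/eqP; apply: contraNT nG' => /(pA j i); rewrite eq_sym; apply.
  by rewrite a1 a2 addr0 mul0r.
rewrite PA0 add0r in PQ.
have sA' : A'^T = A' by rewrite /A' !trmx_mul trmxK sA mulmxA.
have eA' : forall i j, compl_graph H i j -> A' i j = b i j.
  move=> i j c; rewrite -PQ [PW H A' i j]mxE c.
  have -> : A' j i = A' i j by apply: sym_entry.
  by field.
have dA : `|A' - A| <= K1 * r.
  have -> : A' - A = (A *m Z + Z^T *m A) + Z^T *m A *m Z.
    by rewrite /A' expand_QAQ; apply/matrixP => i j; rewrite !mxE; ring.
  apply: le_trans (ler_normD _ _) _; apply: le_trans (lerD (ler_normD _ _) (lexx _)) _.
  have u1 := @mxn_mulb R n A Z a r (lexx _) hZ.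
  have u2 := @mxn_mulb R n Z^T A r a (ltac:(by rewrite mxn_tr)) (lexx _).
  have u3 := @mxn_mulb R n (Z^T *m A) Z (k * r * a) r u2 hZ.
  have u4 : k * (k * r * a) * r <= k ^+ 2 * a * r.
    have -> : k * (k * r * a) * r = (k ^+ 2 * a * r) * r by ring.
    by apply: ler_piMr => //; rewrite !mulr_ge0 ?exprn_ge0 // ltW.
  have -> : K1 * r = k * a * r + k * r * a + k ^+ 2 * a * r by rewrite /K1; ring.
  by rewrite !lerD // (le_trans u3 u4).
exists A'; split.
- split => // i j ij nz.
  case Hij : (H i j); first exact: HH'.
  have c : compl_graph H i j by rewrite /compl_graph ij Hij.
  move: nz; rewrite eA' // mxE; case: ifP => [/andP [] //|_]; by rewrite eqxx.
- by move=> x; rewrite /A' char_poly_conj.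
- apply: le_lt_trans (NB _) _; rewrite distrC.
  apply: le_lt_trans rK1; rewrite -mulrA ler_wpM2l //.
- move=> X [sX pX] dX cX.
  have PX : PW H X = X.
    apply/matrixP => i j; rewrite !mxE; case: ifP => c.
      have -> : X j i = X i j by apply: sym_entry.
      by field.
    move: c; rewrite /compl_graph; case: eqVneq => [-> _|ij /= /negbFE Hij].
      by rewrite dX.
    apply/esym/eqP; apply: contraT => nz.
    by have := pX i j ij nz; rewrite /compl_graph ij (HH' _ _ Hij).
  have MX : Mt A H X = PW H (comm A (comm A X)) by rewrite /Mt PX subrr addr0.
  have cAX : comm A X = comm (A - A') X.
    have cX' : comm A' X = 0 := cX.
    by rewrite -comm_subl cX' subr0.
  have nX : `|X| <= 2^-1 * `|X|.
    rewrite -{1}(Kg X); apply: le_trans (gC _) _; rewrite MX.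
    apply: le_trans (_ : _ <= C * `|comm A (comm A X)|) _.
      by rewrite ler_wpM2l // PW_norm.
    rewrite cAX.
    apply: le_trans (_ : _ <= C * (2 * k * a * `|comm (A - A') X|)) _.
      by rewrite ler_wpM2l // comm_norm.
    have c1 := @comm_norm R n (A - A') X.
    have c2' : `|comm (A - A') X| <= 2 * k * (K1 * r) * `|X|.
      apply: le_trans c1 _; rewrite ler_wpM2r // ler_wpM2l ?mulr_ge0 //.
      by rewrite distrC.
    have -> : 2^-1 * `|X| = C * (2 * k * a * (2 * k * (K1 * r) * `|X|)) +
      (2^-1 - 4 * k ^+ 2 * C * a * K1 * r) * `|X| by ring.
    rewrite -[X in X <= _]addr0 lerD // ?mulr_ge0 ?subr_ge0 //.
    rewrite ler_wpM2l // -/a ler_wpM2l ?mulr_ge0 //.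
  apply/eqP; rewrite -normr_le0.
  have : `|X| >= 0 by exact: normr_ge0.
  lra.
- move=> i j h nh.
  have ij : i != j by apply: contraTneq h => ->; rewrite iH'.
  by rewrite eA' ?mxE ?h ?nh ?gt_eqF // /compl_graph ij.
Qed.
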